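(* Let $G$ be a claw-free graph and $C$ an even hole of length $2k$, labelled $C=\mathbf{b}_0-\mathbf{a}_0-\mathbf{b}_1-\mathbf{a}_1-\dots-\mathbf{b}_{k-1}-\mathbf{a}_{k-1}-\mathbf{b}_0$ (indices mod $k$). Let $\mathbf{s}\notin C$ with $\Gamma_C(\mathbf{s})=\{\mathbf{b}_0,\mathbf{a}_0,\mathbf{b}_1\}$, and let $\mathbf{t}\notin C\cup\{\mathbf{s}\}$ be adjacent to exactly one element of $\{\mathbf{s},\mathbf{a}_0\}$. Then, with $\mathbf{u}\in\{\mathbf{s},\mathbf{a}_0\}$ denoting that element, $\Gamma_{\{\mathbf{s}\}\cup C}(\mathbf{t})$ is one of (i) $\{\mathbf{a}_{k-1},\mathbf{b}_0,\mathbf{u}\}$; (ii) $\{\mathbf{b}_{k-1},\mathbf{a}_{k-1},\mathbf{b}_0,\mathbf{u}\}$; (iii) $\{\mathbf{u},\mathbf{b}_1,\mathbf{a}_1\}$; (iv) $\{\mathbf{u},\mathbf{b}_1,\mathbf{a}_1,\mathbf{b}_2\}$. If $k=2$, cases (ii) and (iv) coincide.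
   Context: A hole is an induced cycle of length at least 4; an even hole has even length. Claw-free: no induced $K_{1,3}$. $\Gamma_U(\mathbf{t})$ denotes the set of neighbours of $\mathbf{t}$ in $U$. (The condition on $\mathbf{s}$ says $(C\setminus\{\mathbf{a}_0\})\cup\{\mathbf{s}\}$ is a single-vertex deformation of $C$, with $\mathbf{a}_0$ the clone of $\mathbf{s}$.) *)

(* Defs.v *)
From mathcomp Require Import all_boot.
Set Implicit Arguments. Unset Strict Implicit. Unset Printing Implicit Defensive.

Definition simple_graph (T : finType) (e : rel T) : Prop :=
  symmetric e /\ irreflexive e.

Definition claw_free (T : finType) (e : rel T) : Prop :=
  forall x y z w : T,
    ~ [/\ e x y, e x z, e x w,
          [&& y != z, y != w & z != w] &
          [&& ~~ e y z, ~~ e y w & ~~ e z w]].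

(* C = b_0 - a_0 - b_1 - a_1 - ... - b_{k-1} - a_{k-1} - b_0 is an even hole
   (induced cycle) of length 2k >= 4; indices are read mod k. Only the values
   a i, b i for i < k are relevant. *)
Definition even_hole (T : finType) (e : rel T) (k : nat) (a b : nat -> T) : Prop :=
  2 <= k /\
  (forall i j, i < k -> j < k -> a i = a j -> i = j) /\
  (forall i j, i < k -> j < k -> b i = b j -> i = j) /\
  (forall i j, i < k -> j < k -> a i != b j) /\
  (forall i j, i < k -> j < k -> ~~ e (a i) (a j)) /\
  (forall i j, i < k -> j < k -> ~~ e (b i) (b j)) /\
  (forall i j, i < k -> j < k ->
     e (b i) (a j) = (i == j) || (i == (j + 1) %% k)).

Definition hole_set (T : finType) (k : nat) (a b : nat -> T) : {set T} :=
  [set x | [exists i : 'I_k, (x == a i) || (x == b i)]].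

Definition nbhd_in (T : finType) (e : rel T) (U : {set T}) (t : T) : {set T} :=
  [set x in U | e t x].

(* Main.v *)
Require Import Defs.
From mathcomp Require Import all_boot.
From mathcomp Require Import zify.
Set Implicit Arguments. Unset Strict Implicit. Unset Printing Implicit Defensive.
Set Bullet Behavior "Strict Subproofs".

Lemma clawE (T : finType) (e : rel T) (x y z w : T) : claw_free e ->
  e x y -> e x z -> e x w -> y != z -> y != w -> z != w ->
  ~~ e y z -> ~~ e y w -> e z w.
Proof.
move=> H xy xz xw yz yw zw nyz nyw; apply/negPn/negP => nzw.
by apply: (H x y z w); split => //; apply/and3P; split.
Qed.

Lemma clawF (T : finType) (e : rel T) (x y z w : T) : claw_free e ->
  e x y -> e x z -> e x w -> y != z -> y != w -> z != w ->
  ~~ e y z -> ~~ e y w -> ~~ e z w -> False.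
Proof.
move=> H xy xz xw yz yw zw nyz nyw nzw.
by apply: (H x y z w); split => //; apply/and3P; split.
Qed.

Lemma core (T : finType) (e : rel T) k (a b : nat -> T) (t u w : T) :
  symmetric e -> claw_free e -> even_hole e k a b ->
  (forall i, i < k -> t != a i) -> (forall i, i < k -> t != b i) ->
  t != u -> t != w ->
  (forall i, i < k -> 0 < i -> u != a i) -> (forall i, i < k -> u != b i) ->
  (forall i, i < k -> 0 < i -> w != a i) -> (forall i, i < k -> w != b i) ->
  e t u -> ~~ e t w ->
  e u (b 0) -> e u (b 1) -> e w (b 0) -> e w (b 1) ->
  (forall i, i < k -> 0 < i -> ~~ e u (a i)) ->
  (forall i, i < k -> 1 < i -> ~~ e u (b i)) ->
  (forall i, i < k -> 0 < i -> ~~ e w (a i)) ->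
  [\/ [/\ k = 2, e t (b 0), e t (b 1) & e t (a 1)],
      [/\ e t (b 0), ~~ e t (b 1), e t (a k.-1),
          forall i, i < k -> e t (a i) -> i = 0 \/ i = k.-1 &
          forall i, i < k -> e t (b i) -> i = 0 \/ i = k.-1] |
      [/\ e t (b 1), ~~ e t (b 0), e t (a 1),
          forall i, i < k -> e t (a i) -> i = 0 \/ i = 1 &
          forall i, i < k -> e t (b i) -> i = 1 \/ i = 2 %% k]].
Proof.
move=> sym cf [hk [injA [injB [abne [aa [bb ba]]]]]] ta tb tu tw ua ub wa wb
  etu netw ub0 ub1 wb0 wb1 nua nub nwa.
have k1 : k.-1 < k by lia.
have k1p : 0 < k.-1 by lia.
have h0 : 0 < k by lia.
have h1 : 1 < k by lia.
have aneq : forall i j, i < k -> j < k -> i != j -> a i != a j.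
  by move=> i j hi hj; apply: contra => /eqP/(injA _ _ hi hj)->.
have bneq : forall i j, i < k -> j < k -> i != j -> b i != b j.
  by move=> i j hi hj; apply: contra => /eqP/(injB _ _ hi hj)->.
have bam1 : e (b 0) (a k.-1).
  rewrite ba //; have -> : k.-1 + 1 = k by lia.
  by rewrite modnn eqxx orbT.
have b1a1 : e (b 1) (a 1) by rewrite ba // eqxx.
have tb01 : e t (b 0) || e t (b 1).
  apply/negPn/negP; rewrite negb_or => /andP[n0 n1].
  apply: (@clawF T e u t (b 0) (b 1) cf); rewrite ?[e u t]sym ?tb ?bneq ?bb //.
have tbk : e t (b 0) -> e t (a k.-1).
  move=> t0; apply: (@clawE T e (b 0) w t (a k.-1) cf);
    rewrite ?(sym (b 0) w) ?(sym (b 0) t) ?(sym w t) ?wa ?ta ?nwa //.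
  by rewrite eq_sym.
have ta1 : e t (b 1) -> e t (a 1).
  move=> t1; apply: (@clawE T e (b 1) w t (a 1) cf);
    rewrite ?(sym (b 1) w) ?(sym (b 1) t) ?(sym w t) ?wa ?ta ?nwa //.
  by rewrite eq_sym.
case/orP: (orbN (e t (b 0))) => t0; case/orP: (orbN (e t (b 1))) => t1.
- have A := tbk t0; have B := ta1 t1.
  case: (boolP (k == 2)) => k2; first by constructor 1; split => //; apply/eqP.
  exfalso; apply: (@clawF T e t u (a k.-1) (a 1) cf);
    rewrite ?ua ?aneq ?nua ?aa ?(sym u t) //. clear -k2 hk; lia.
- constructor 2; split => //; first exact: tbk.
  + move=> i hi ti; have [->|i0] := eqVneq i 0; first by left.
    have [->|ik] := eqVneq i k.-1; first by right.
    exfalso; apply: (@clawF T e t u (a k.-1) (a i) cf);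
      rewrite ?ua ?aneq ?nua ?aa ?tbk //. all: clear -hk hi i0 ik; lia.
  + move=> i hi ti; have [->|i0] := eqVneq i 0; first by left.
    have [->|ik] := eqVneq i k.-1; first by right.
    have i1 : i != 1 by apply: contraNneq t1 => ei; rewrite -ei.
    exfalso; apply: (@clawF T e t u (a k.-1) (b i) cf);
      rewrite ?ua ?ub ?abne ?nua ?nub ?tbk //. all: try (clear -hk hi i0 ik i1; lia).
    rewrite sym ba //; have -> : k.-1 + 1 = k by clear -hk; lia.
    by rewrite modnn (negbTE i0) (negbTE ik).
- constructor 3; split => //; first exact: ta1.
  + move=> i hi ti; have [->|i0] := eqVneq i 0; first by left.
    have [->|ik] := eqVneq i 1; first by right.
    exfalso; apply: (@clawF T e t u (a 1) (a i) cf);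
      rewrite ?ua ?aneq ?nua ?aa ?ta1 //. all: clear -hk hi i0 ik; lia.
  + move=> i hi ti; have [->|i1] := eqVneq i 1; first by left.
    have [->|ik] := eqVneq i (2 %% k); first by right.
    have i0 : i != 0 by apply: contraNneq t0 => ei; rewrite -ei.
    exfalso; apply: (@clawF T e t u (a 1) (b i) cf);
      rewrite ?ua ?ub ?abne ?nua ?nub ?ta1 //. all: try (clear -hk hi i0 ik i1; lia).
    by rewrite sym ba // (negbTE i1) (negbTE ik).
- by rewrite (negbTE t0) (negbTE t1) in tb01.
Qed.

Ltac contra_ti ti :=
  match goal with H : is_true (~~ _) |- _ => by rewrite ti in H end.

Lemma N_eq (T : finType) (e : rel T) k (a b : nat -> T) (s t : T) (S : {set T}) :
  (forall x, x \in S -> ((x == s) || (x \in hole_set k a b)) && e t x) ->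
  (e t s -> s \in S) ->
  (forall i, i < k -> e t (a i) -> a i \in S) ->
  (forall i, i < k -> e t (b i) -> b i \in S) ->
  nbhd_in e (s |: hole_set k a b) t = S.
Proof.
move=> H1 Hs Ha Hb; apply/setP => x; rewrite !inE.
apply/idP/idP => [/andP [/orP [/eqP -> | hx] tx] | /H1].
- exact: Hs.
- move: hx tx => /existsP [i /orP [/eqP -> | /eqP ->]] tx.
  + exact: Ha.
  + exact: Hb.
- by rewrite /hole_set inE.
Qed.

Theorem lemma3 (T : finType) (e : rel T) (k : nat) (a b : nat -> T) (s t : T) :
  simple_graph e -> claw_free e -> even_hole e k a b ->
  s \notin hole_set k a b ->
  nbhd_in e (hole_set k a b) s = [set b 0; a 0; b 1] ->
  t \notin hole_set k a b -> t != s ->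
  e t s (+) e t (a 0) ->
  let u := if e t s then s else a 0 in
  let N := nbhd_in e (s |: hole_set k a b) t in
  [\/ N = [set a (k.-1); b 0; u],
      N = [set b (k.-1); a (k.-1); b 0; u],
      N = [set u; b 1; a 1] |
      N = [set u; b 1; a 1; b (2 %% k)]].
Proof.
move=> [sym irr] cf hole sH Hs tH tsn xr; cbv zeta.
have hole' := hole.
move: hole' => [hk [injA [injB [abne [aa [bb ba]]]]]].
have k1 : k.-1 < k by clear -hk; lia.
have h0 : 0 < k by clear -hk; lia.
have h1 : 1 < k by clear -hk; lia.
have h2 : 2 %% k < k by rewrite ltn_pmod.
have memA : forall i, i < k -> a i \in hole_set k a b.
  by move=> i hi; rewrite /hole_set inE; apply/existsP; exists (Ordinal hi); rewrite eqxx.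
have memB : forall i, i < k -> b i \in hole_set k a b.
  by move=> i hi; rewrite /hole_set inE; apply/existsP; exists (Ordinal hi); rewrite eqxx orbT.
have aneq : forall i j, i < k -> j < k -> i != j -> a i != a j.
  by move=> i j hi hj; apply: contra => /eqP/(injA _ _ hi hj)->.
have bneq : forall i j, i < k -> j < k -> i != j -> b i != b j.
  by move=> i j hi hj; apply: contra => /eqP/(injB _ _ hi hj)->.
have aeq : forall i j, i < k -> j < k -> (a i == a j) = (i == j).
  by move=> i j hi hj; apply/eqP/eqP => [/(injA _ _ hi hj) | ->].
have beq : forall i j, i < k -> j < k -> (b i == b j) = (i == j).
  by move=> i j hi hj; apply/eqP/eqP => [/(injB _ _ hi hj) | ->].
have abF : forall i j, i < k -> j < k -> (a i == b j) = false.
  by move=> i j hi hj; apply/negbTE/abne.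
have baF : forall i j, i < k -> j < k -> (b j == a i) = false.
  by move=> i j hi hj; rewrite eq_sym abF.
have sa : forall i, i < k -> e s (a i) = (i == 0).
  move=> i hi; move/setP: Hs => /(_ (a i)).
  rewrite !inE.
  have -> : [exists j : 'I_k, (a i == a j) || (a i == b j)].
    by apply/existsP; exists (Ordinal hi); rewrite eqxx.
  rewrite /= => ->. rewrite (abF i 0 hi h0) (aeq i 0 hi h0) (abF i 1 hi h1). by rewrite orbF.
have sb : forall i, i < k -> e s (b i) = (i == 0) || (i == 1).
  move=> i hi; move/setP: Hs => /(_ (b i)).
  rewrite !inE.
  have -> : [exists j : 'I_k, (b i == a j) || (b i == b j)].
    by apply/existsP; exists (Ordinal hi); rewrite eqxx orbT.
  by rewrite /= => ->; rewrite (baF 0 i) // !beq // orbF.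
have sA : forall i, i < k -> s != a i.
  by move=> i hi; apply: contraNneq sH => ->; exact: memA.
have sB : forall i, i < k -> s != b i.
  by move=> i hi; apply: contraNneq sH => ->; exact: memB.
have tA : forall i, i < k -> t != a i.
  by move=> i hi; apply: contraNneq tH => ->; exact: memA.
have tB : forall i, i < k -> t != b i.
  by move=> i hi; apply: contraNneq tH => ->; exact: memB.
have a0b0 : e (a 0) (b 0) by rewrite sym ba.
have a0b1 : e (a 0) (b 1) by rewrite sym ba // modn_small // eqxx orbT.
have memA' : forall i, i < k -> [exists j : 'I_k, (a i == a j) || (a i == b j)].
  by move=> i hi; apply/existsP; exists (Ordinal hi); rewrite eqxx.
have memB' : forall i, i < k -> [exists j : 'I_k, (b i == a j) || (b i == b j)].
  by move=> i hi; apply/existsP; exists (Ordinal hi); rewrite eqxx orbT.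
have a0a : forall i, i < k -> 0 < i -> a 0 != a i.
  by move=> i hi i0; apply: aneq => //; rewrite eq_sym -lt0n.
have nsa : forall i, i < k -> 0 < i -> ~~ e s (a i).
  by move=> i hi i0; rewrite sa // -lt0n.
have nsb : forall i, i < k -> 1 < i -> ~~ e s (b i).
  by move=> i hi i1; rewrite sb //; case: i hi i1 => [|[|i]].
have na0b : forall i, i < k -> 1 < i -> ~~ e (a 0) (b i).
  by move=> i hi i1; rewrite sym ba // modn_small //; case: i hi i1 => [|[|i]].
have sb0 : e s (b 0) by rewrite sb.
have sb1 : e s (b 1) by rewrite sb // orbT.
case Ets: (e t s); move: xr; rewrite Ets /= => xr.
-
  have := @core T e k a b t s (a 0) sym cf hole tA tB tsn (tA 0 h0)
    (fun i hi _ => sA i hi) sB a0a (fun i hi => abne 0 i h0 hi)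
    Ets xr sb0 sb1 a0b0 a0b1 nsa nsb (fun i hi _ => aa 0 i h0 hi).
  case=> [[k2 t0 t1 ta1] | [t0 nt1 tak HA HB] | [t1 nt0 ta1 HA HB]].
  + subst k; constructor 2; apply: N_eq => /=.
    * by move=> x; rewrite !inE -!orbA => /or4P[]/eqP->; rewrite ?memA' ?memB' ?eqxx /= ?orbT.
    * by rewrite !inE eqxx ?orbT.
    * case=> [|[|i]] // hi ti; rewrite !inE ?eqxx /= ?orbT //; contra_ti ti.
    * case=> [|[|i]] // hi ti; rewrite !inE ?eqxx /= ?orbT //; contra_ti ti.
  + case/orP: (orbN (e t (b k.-1))) => tbk.
    * constructor 2; apply: N_eq.
      -- by move=> x; rewrite !inE -!orbA => /or4P[]/eqP->; rewrite ?memA' ?memB' ?eqxx /= ?orbT.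
      -- by rewrite !inE eqxx ?orbT.
      -- move=> i hi ti; case: (HA i hi ti) => ei; subst i; rewrite !inE ?eqxx /= ?orbT //; contra_ti ti.
      -- move=> i hi ti; case: (HB i hi ti) => ei; subst i; rewrite !inE ?eqxx /= ?orbT //; contra_ti ti.
    * constructor 1; apply: N_eq.
      -- by move=> x; rewrite !inE -!orbA => /or3P[]/eqP->; rewrite ?memA' ?memB' ?eqxx /= ?orbT.
      -- by rewrite !inE eqxx ?orbT.
      -- move=> i hi ti; case: (HA i hi ti) => ei; subst i; rewrite !inE ?eqxx /= ?orbT //; contra_ti ti.
      -- move=> i hi ti; case: (HB i hi ti) => ei; subst i; rewrite !inE ?eqxx /= ?orbT //; contra_ti ti.
  + case/orP: (orbN (e t (b (2 %% k)))) => tbk.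
    * constructor 4; apply: N_eq.
      -- by move=> x; rewrite !inE -!orbA => /or4P[]/eqP->; rewrite ?memA' ?memB' ?eqxx /= ?orbT.
      -- by rewrite !inE eqxx ?orbT.
      -- move=> i hi ti; case: (HA i hi ti) => ei; subst i; rewrite !inE ?eqxx /= ?orbT //; contra_ti ti.
      -- move=> i hi ti; case: (HB i hi ti) => ei; subst i; rewrite !inE ?eqxx /= ?orbT //; contra_ti ti.
    * constructor 3; apply: N_eq.
      -- by move=> x; rewrite !inE -!orbA => /or3P[]/eqP->; rewrite ?memA' ?memB' ?eqxx /= ?orbT.
      -- by rewrite !inE eqxx ?orbT.
      -- move=> i hi ti; case: (HA i hi ti) => ei; subst i; rewrite !inE ?eqxx /= ?orbT //; contra_ti ti.
      -- move=> i hi ti; case: (HB i hi ti) => ei; subst i; rewrite !inE ?eqxx /= ?orbT //; contra_ti ti.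
-
  have := @core T e k a b t (a 0) s sym cf hole tA tB (tA 0 h0) tsn
    a0a (fun i hi => abne 0 i h0 hi) (fun i hi _ => sA i hi) sB
    xr (negbT Ets) a0b0 a0b1 sb0 sb1 (fun i hi _ => aa 0 i h0 hi) na0b nsa.
  case=> [[k2 t0 t1 ta1] | [t0 nt1 tak HA HB] | [t1 nt0 ta1 HA HB]].
  + subst k; constructor 2; apply: N_eq => /=.
    * by move=> x; rewrite !inE -!orbA => /or4P[]/eqP->; rewrite ?memA' ?memB' ?eqxx /= ?orbT.
    * by rewrite Ets.
    * case=> [|[|i]] // hi ti; rewrite !inE ?eqxx /= ?orbT //; contra_ti ti.
    * case=> [|[|i]] // hi ti; rewrite !inE ?eqxx /= ?orbT //; contra_ti ti.
  + case/orP: (orbN (e t (b k.-1))) => tbk.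
    * constructor 2; apply: N_eq.
      -- by move=> x; rewrite !inE -!orbA => /or4P[]/eqP->; rewrite ?memA' ?memB' ?eqxx /= ?orbT.
      -- by rewrite Ets.
      -- move=> i hi ti; case: (HA i hi ti) => ei; subst i; rewrite !inE ?eqxx /= ?orbT //; contra_ti ti.
      -- move=> i hi ti; case: (HB i hi ti) => ei; subst i; rewrite !inE ?eqxx /= ?orbT //; contra_ti ti.
    * constructor 1; apply: N_eq.
      -- by move=> x; rewrite !inE -!orbA => /or3P[]/eqP->; rewrite ?memA' ?memB' ?eqxx /= ?orbT.
      -- by rewrite Ets.
      -- move=> i hi ti; case: (HA i hi ti) => ei; subst i; rewrite !inE ?eqxx /= ?orbT //; contra_ti ti.
      -- move=> i hi ti; case: (HB i hi ti) => ei; subst i; rewrite !inE ?eqxx /= ?orbT //; contra_ti ti.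
  + case/orP: (orbN (e t (b (2 %% k)))) => tbk.
    * constructor 4; apply: N_eq.
      -- by move=> x; rewrite !inE -!orbA => /or4P[]/eqP->; rewrite ?memA' ?memB' ?eqxx /= ?orbT.
      -- by rewrite Ets.
      -- move=> i hi ti; case: (HA i hi ti) => ei; subst i; rewrite !inE ?eqxx /= ?orbT //; contra_ti ti.
      -- move=> i hi ti; case: (HB i hi ti) => ei; subst i; rewrite !inE ?eqxx /= ?orbT //; contra_ti ti.
    * constructor 3; apply: N_eq.
      -- by move=> x; rewrite !inE -!orbA => /or3P[]/eqP->; rewrite ?memA' ?memB' ?eqxx /= ?orbT.
      -- by rewrite Ets.
      -- move=> i hi ti; case: (HA i hi ti) => ei; subst i; rewrite !inE ?eqxx /= ?orbT //; contra_ti ti.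
      -- move=> i hi ti; case: (HB i hi ti) => ei; subst i; rewrite !inE ?eqxx /= ?orbT //; contra_ti ti.
Qed.
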